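(* Let $F$ be an infinite field (e.g. $\mathbb{R}$ or $\mathbb{C}$), let $V$ be a vector space over $F$, and let $n\ge 1$. If a widget with $n$ pairs in $V$ is valid, then it contains a subwidget which is legal but not full.
   Context: A widget with $n$ pairs in $V$ is an indexed family of $n$ pairs of vectors $p_i=(p_i^+,p_i^-)$, $i=1,\dots,n$, in $V$ (the vectors $p_i^+,p_i^-$ are called the points of the pair $p_i$). A section of a widget is a set of points containing at most one point from each pair. A widget with $n$ pairs is legal if every section spans a linear subspace of $V$ of dimension at most $n-1$. A widget with $n$ pairs is full if the linear span of all its $2n$ points has dimension at least $n$. A widget is valid if it is both legal and full. A subwidget of a widget with $n$ pairs is the widget formed by some $k$ of its pairs with $1\le k<n$; it is itself a widget with $k$ pairs, so it is legal if every one of its sections spans a subspace of dimension at most $k-1$, and full if its $2k$ points span a subspace of dimension at least $k$. *)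

(* Defs.v *)
From HB Require Import structures.
From mathcomp Require Import all_boot all_order all_algebra.
Set Implicit Arguments. Unset Strict Implicit. Unset Printing Implicit Defensive.
Import GRing.Theory.
Local Open Scope ring_scope.

Definition infinite_field (F : fieldType) : Prop :=
  forall s : seq F, exists x : F, x \notin s.

Section Widgets.
Variables (F : fieldType) (V : lmodType F).

Definition lin_indep (s : seq V) : Prop :=
  forall c : nat -> F, \sum_(i < size s) c i *: s`_i = 0 ->
    forall i, (i < size s)%N -> c i = 0.

(* dim span(S) <= d : every linearly independent family drawn from S has size <= d
   (the dimension of the span of a finite set is the maximal size of an
   independent subfamily). *)
Definition span_dim_le (S : seq V) (d : nat) : Prop :=
  forall s : seq V, {subset s <= S} -> lin_indep s -> (size s <= d)%N.

Definition span_dim_ge (S : seq V) (d : nat) : Prop :=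
  exists s : seq V, [/\ {subset s <= S}, lin_indep s & (d <= size s)%N].

(* A widget indexed by a finite type I (|I| pairs): pair i = (p_i^+, p_i^-). *)
Definition widget (I : finType) := I -> V * V.

(* A section is given by choosing, for each pair, no point (None),
   p_i^+ (Some true) or p_i^- (Some false). *)
Definition section_points (I : finType) (w : widget I) (sigma : I -> option bool)
  : seq V :=
  pmap (fun i => omap (fun b : bool => if b then (w i).1 else (w i).2) (sigma i))
       (enum I).

Definition all_points (I : finType) (w : widget I) : seq V :=
  flatten [seq [:: (w i).1; (w i).2] | i <- enum I].

Definition legal (I : finType) (w : widget I) : Prop :=
  forall sigma : I -> option bool, span_dim_le (section_points w sigma) (#|I| - 1).

Definition full (I : finType) (w : widget I) : Prop :=
  span_dim_ge (all_points w) #|I|.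

Definition valid (I : finType) (w : widget I) : Prop := legal w /\ full w.

Definition subwidget (I : finType) (w : widget I) (S : {set I})
  : widget {i : I | i \in S} :=
  fun j => w (val j).

End Widgets.

Arguments subwidget {F V I} w S _.
Arguments legal {F V I} w.
Arguments full {F V I} w.
Arguments valid {F V I} w.

(* Main.v *)
Require Import Defs.
From HB Require Import structures.
From mathcomp Require Import all_boot all_order all_algebra.
From Stdlib Require Import Classical.
From mathcomp Require Import zify.
Set Implicit Arguments. Unset Strict Implicit. Unset Printing Implicit Defensive.
Import GRing.Theory.
Local Open Scope ring_scope.

Section Rado.
Variables (F : fieldType) (n k : nat) (v : 'I_n -> bool -> 'rV[F]_k).

Definition Ablk (s : 'I_n -> option bool) (j : 'I_n) : 'M[F]_k :=
  match s j with Some b => <<v j b>>%MS | None => (v j true + v j false)%MS end.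

Definition Sp (s : 'I_n -> option bool) (S : {set 'I_n}) : 'M[F]_k :=
  (\sum_(j in S) Ablk s j)%MS.

Definition Hall s := forall S : {set 'I_n}, (#|S| <= \rank (Sp s S))%N.

Lemma Ablk_Sp s (S : {set 'I_n}) j : j \in S -> (Ablk s j <= Sp s S)%MS.
Proof. by move=> jS; rewrite /Sp (sumsmx_sup j). Qed.

Lemma Sp_sub s (S : {set 'I_n}) m (W : 'M[F]_(m, k)) :
  (forall j, j \in S -> (Ablk s j <= W)%MS) -> (Sp s S <= W)%MS.
Proof. by move=> H; apply/sumsmx_subP => j /H. Qed.

Lemma v_Ablk s j b : (s j == None) || (s j == Some b) -> (v j b <= Ablk s j)%MS.
Proof.
rewrite /Ablk; case: (s j) => [b'|] /=.
  by move/eqP => [<-]; rewrite genmxE.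
by case: b; rewrite ?addsmxSl ?addsmxSr.
Qed.

Definition upd (s : 'I_n -> option bool) i b := fun j => if j == i then Some b else s j.

Lemma rado m : forall s, (#|[set j | s j == None]| <= m)%N -> Hall s ->
  exists t, (forall j, t j != None) /\ Hall t.
Proof.
elim: m => [|m IH] s.
  rewrite leqn0 => /eqP/cards0_eq H hs; exists s; split=> // j.
  apply/negP => Hj; have : j \in [set j | s j == None] by rewrite inE.
  by rewrite H inE.
move=> Hm hs.
case: (boolP [exists j, s j == None]); last first.
  move/existsPn => H; exists s; split => //.
case/existsP => i /eqP si.
have Hc : forall b, (#|[set j | upd s i b j == None]| <= m)%N.
  move=> b; rewrite -ltnS; apply: leq_trans (proper_card _) Hm.
  rewrite properE; apply/andP; split.
    by apply/subsetP => j; rewrite !inE /upd; case: ifP.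
  apply/negP => /subsetP /(_ i); rewrite !inE /upd eqxx si eqxx; by move/(_ isT).
have [H1|H1] := classic (Hall (upd s i true)).
  exact: IH (Hc true) H1.
have [H2|H2] := classic (Hall (upd s i false)).
  exact: IH (Hc false) H2.
have [S1 HS1] : exists S, (\rank (Sp (upd s i true) S) < #|S|)%N.
  apply: NNPP => C; apply: H1 => S; rewrite leqNgt; apply/negP => h; apply: C; by exists S.
have [S2 HS2] : exists S, (\rank (Sp (upd s i false) S) < #|S|)%N.
  apply: NNPP => C; apply: H2 => S; rewrite leqNgt; apply/negP => h; apply: C; by exists S.
have Aeq : forall b j, j != i -> Ablk (upd s i b) j = Ablk s j.
  by move=> b j /negbTE hj; rewrite /Ablk /upd hj.
have iS : forall b (S : {set 'I_n}), (\rank (Sp (upd s i b) S) < #|S|)%N -> i \in S.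
  move=> b S hS; apply: contraTT hS => iS; rewrite -leqNgt; apply: leq_trans (hs S) _.
  apply: mxrankS; apply: Sp_sub => j jS; rewrite -(Aeq b); last by apply: contraNneq iS => <-.
  exact: Ablk_Sp.
have i1 := iS _ _ HS1; have i2 := iS _ _ HS2.
set X := Sp (upd s i true) S1; set Y := Sp (upd s i false) S2.
have hU : (#|S1 :|: S2| <= \rank (X + Y)%MS)%N.
  apply: leq_trans (hs _) _; apply: mxrankS; apply: Sp_sub => j; rewrite inE.
  case: (eqVneq j i) => [->|ji].
    move=> _; rewrite /Ablk si addsmx_sub; apply/andP; split.
      apply: submx_trans (addsmxSl X Y).
      have := Ablk_Sp (upd s i true) i1; rewrite /Ablk /upd eqxx genmxE //.
    apply: submx_trans (addsmxSr X Y).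
    have := Ablk_Sp (upd s i false) i2; rewrite /Ablk /upd eqxx genmxE //.
  case/orP => jS.
    rewrite -(Aeq true) //; apply: submx_trans (addsmxSl X Y); exact: Ablk_Sp.
  rewrite -(Aeq false) //; apply: submx_trans (addsmxSr X Y); exact: Ablk_Sp.
have hI : (#|(S1 :&: S2) :\ i| <= \rank (X :&: Y)%MS)%N.
  apply: leq_trans (hs _) _; apply: mxrankS; apply: Sp_sub => j; rewrite !inE.
  case/andP => ji /andP [j1 j2]; rewrite sub_capmx.
  by apply/andP; split; [rewrite -(Aeq true j) | rewrite -(Aeq false j)] => //; apply: Ablk_Sp.
have e1 := mxrank_sum_cap X Y.
have e2 := cardsUI S1 S2.
have e3 : #|S1 :&: S2| = (#|S1 :&: S2 :\ i|).+1 by rewrite (cardsD1 i) inE i1 i2.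
have HX : (\rank X < #|S1|)%N := HS1. have HY : (\rank Y < #|S2|)%N := HS2.
exfalso; clearbody X Y. move: e1 e2 e3 HX HY hU hI.
clear.
generalize (\rank X) (\rank Y) (\rank (X + Y)%MS) (\rank (X :&: Y)%MS) #|S1| #|S2| #|S1 :|: S2| #|S1 :&: S2| #|S1 :&: S2 :\ i|.
lia.
Qed.
End Rado.

Section Lin.
Variables (F : fieldType) (V : lmodType F).

Lemma basis_ex (P : seq V) : exists B : seq V, exists f : V -> nat -> F,
  lin_indep B /\ forall x, x \in P -> x = \sum_(l < size B) f x l *: B`_l.
Proof.
elim: P => [|p P [B [f [hB hf]]]].
  by exists [::], (fun _ _ => 0); split => // c _ i.
have [[a ha]|na] := classic (exists a : nat -> F, p = \sum_(l < size B) a l *: B`_l).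
  exists B, (fun x => if x == p then a else f x); split => // x.
  rewrite inE; case: eqP => [-> _|_ /= xP]; first exact: ha.
  exact: hf.
exists (p :: B), (fun x => if x == p then (fun l => (l == 0)%:R)
                           else (fun l => if l is l'.+1 then f x l' else 0)).
split.
  move=> c /=; rewrite big_ord_recl /= => hc.
  have c0 : c 0 = 0.
    apply: NNPP => /eqP c0; apply: na.
    exists (fun l => - (c l.+1) / c 0%N).
    have : c 0%N *: p = - \sum_(i < size B) c (bump 0 i) *: B`_i.
      by apply/eqP; rewrite -addr_eq0; apply/eqP.
    move=> /(congr1 (fun y => (c 0%N)^-1 *: y)).
    rewrite scalerA mulVf ?scale1r // => ->.
    rewrite scalerN scaler_sumr -sumrN; apply: eq_bigr => i _.
    by rewrite scalerA -scaleNr mulrC mulNr.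
  rewrite c0 scale0r add0r in hc.
  have hc' := hB (fun l => c l.+1) hc.
  move=> [|i] // hi; exact: hc'.
move=> x; rewrite inE big_ord_recl /=; case: eqP => [-> _|_ /= xP].
  by rewrite scale1r big1 ?addr0 // => i _; rewrite scale0r.
by rewrite scale0r add0r; apply: hf.
Qed.


Definition rowfun m (u : 'rV[F]_m) (j : nat) : F :=
  if insub j is Some o then u 0 o else 0.
Lemma rowfunE m (u : 'rV[F]_m) (o : 'I_m) : rowfun u o = u 0 o.
Proof. by rewrite /rowfun valK. Qed.

Section Coord.
Variables (B : seq V) (f : V -> nat -> F) (P : seq V).
Hypothesis hB : lin_indep B.
Hypothesis hf : forall x, x \in P -> x = \sum_(l < size B) f x l *: B`_l.

Definition crow x : 'rV[F]_(size B) := \row_(l < size B) f x l.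
Definition cmx (s : seq V) : 'M[F]_(size s, size B) :=
  \matrix_(i < size s, l < size B) f s`_i l.

Lemma comb (s : seq V) (u : 'rV[F]_(size s)) : {subset s <= P} ->
  \sum_(i < size s) u 0 i *: s`_i = \sum_(l < size B) (u *m cmx s) 0 l *: B`_l.
Proof.
move=> sP.
rewrite (eq_bigr (fun i : 'I_(size s) => \sum_(l < size B) (u 0 i * f s`_i l) *: B`_l)); last first.
  move=> i _; rewrite {1}(hf (sP _ (mem_nth 0 (ltn_ord i)))) scaler_sumr.
  by apply: eq_bigr => l _; rewrite scalerA.
rewrite exchange_big; apply: eq_bigr => l _; rewrite !mxE scaler_suml.
by apply: eq_bigr => i _; rewrite mxE.
Qed.

Lemma indep_rank s : {subset s <= P} -> lin_indep s -> \rank (cmx s) = size s.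
Proof.
move=> sP hs; apply/eqP; rewrite eqn_leq rank_leq_row /=; apply: NNPP => /negP.
rewrite -ltnNge => hlt.
have : kermx (cmx s) != 0.
  by rewrite -mxrank_eq0 mxrank_ker; lia.
case/eqP/matrixP/not_all_ex_not => i /not_all_ex_not [l hl].
set u := row i (kermx (cmx s)).
have hu : u *m cmx s = 0 by rewrite /u -row_mul mulmx_ker row0.
have := hs (rowfun u).
have -> : \sum_(j < size s) rowfun u j *: s`_j = \sum_(j < size s) u 0 j *: s`_j.
  by apply: eq_bigr => j _; rewrite rowfunE.
rewrite comb // hu big1; last by move=> j _; rewrite mxE scale0r.
move/(_ erefl l (ltn_ord l)); rewrite rowfunE /u mxE => h; apply: hl.
by rewrite h mxE.
Qed.

Lemma rank_indep s : {subset s <= P} -> (size s <= \rank (cmx s))%N -> lin_indep s.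
Proof.
move=> sP hr c hc i hi.
have hfree : row_free (cmx s).
  by rewrite /row_free eqn_leq rank_leq_row.
set u := \row_(j < size s) c j.
have : u *m cmx s = 0.
  apply/rowP => l; rewrite [RHS]mxE.
  have hz : \sum_(l < size B) (u *m cmx s) 0 l *: B`_l = 0.
    by rewrite -comb //; apply: etrans _ hc; apply: eq_bigr => j _; rewrite mxE.
  have := @hB (rowfun (u *m cmx s)).
  have -> : \sum_(j < size B) rowfun (u *m cmx s) j *: B`_j = \sum_(j < size B) (u *m cmx s) 0 j *: B`_j.
    by apply: eq_bigr => j _; rewrite rowfunE.
  by move/(_ hz l (ltn_ord l)); rewrite rowfunE.
move/eqP; rewrite mulmx_free_eq0 // => /eqP/rowP/(_ (Ordinal hi)).
by rewrite !mxE.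
Qed.

Lemma cmx_sub s m (W : 'M[F]_(m, size B)) :
  (forall x, x \in s -> (crow x <= W)%MS) -> (cmx s <= W)%MS.
Proof.
move=> H; apply/row_subP => i.
have -> : row i (cmx s) = crow s`_i by apply/rowP => l; rewrite !mxE.
by apply: H; apply: mem_nth.
Qed.

Lemma crow_cmx s x : x \in s -> (crow x <= cmx s)%MS.
Proof.
move=> xs; have hi : (index x s < size s)%N by rewrite index_mem.
have -> : crow x = row (Ordinal hi) (cmx s).
  by apply/rowP => l; rewrite !mxE /= nth_index.
exact: row_sub.
Qed.

End Coord.
End Lin.

Section Pts.
Variables (F : fieldType) (V : lmodType F).

Definition ptw (I : finType) (w : widget V I) (j : I) (b : bool) : V :=
  if b then (w j).1 else (w j).2.

Lemma sec_pts (I : finType) (w : widget V I) sig x :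
  x \in section_points w sig -> exists j b, x = ptw w j b /\ sig j = Some b.
Proof.
rewrite mem_pmap => /mapP [j _]; case E: (sig j) => [b|] //= [->].
by exists j, b.
Qed.

Lemma all_pts (I : finType) (w : widget V I) x :
  x \in all_points w -> exists j b, x = ptw w j b.
Proof.
case/flatten_mapP => j _; rewrite !inE => /orP [] /eqP ->.
  by exists j, true.
by exists j, false.
Qed.

Lemma pt_all (I : finType) (w : widget V I) j b : ptw w j b \in all_points w.
Proof.
apply/flatten_mapP; exists j; first by rewrite mem_enum.
by case: b; rewrite /ptw !inE eqxx ?orbT.
Qed.

Lemma pt_sec (I : finType) (w : widget V I) sig j b :
  sig j = Some b -> ptw w j b \in section_points w sig.
Proof.
move=> E; rewrite mem_pmap; apply/mapP; exists j; first by rewrite mem_enum.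
by rewrite E.
Qed.
End Pts.

Theorem corollary1p2 (F : fieldType) (V : lmodType F) (n : nat)
  (w : widget V 'I_n) :
  infinite_field F -> (1 <= n)%N -> valid w ->
  exists S : {set 'I_n},
    [/\ (1 <= #|S|)%N, (#|S| < n)%N,
        legal (subwidget w S) & ~ full (subwidget w S)].
Proof.
move=> _ n1 [hleg hfull].
have [B [f [hB hf]]] := basis_ex (all_points w).
pose vv j b := @crow F V B f (ptw w j b).
pose s0 := fun _ : 'I_n => @None bool.
have L : forall (S : {set 'I_n}) (s : seq V),
    (forall x, x \in s -> exists j b, j \in S /\ x = ptw w j b) ->
    lin_indep s -> (size s <= \rank (Sp vv s0 S))%N.
  move=> S s hs hi.
  have sP : {subset s <= all_points w}.
    by move=> x /hs [j [b [_ ->]]]; apply: pt_all.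
  rewrite -(indep_rank hf sP hi); apply: mxrankS; apply: cmx_sub => x /hs [j [b [jS ->]]].
  apply: submx_trans (Ablk_Sp vv s0 jS).
  by apply: v_Ablk.
have nH : ~ Hall vv s0.
  move=> H.
  have [t [ht Ht]] := rado (m := n) (s := s0) (leq_trans (max_card _) (eq_leq (card_ord n))) H.
  set s := section_points w t.
  have sP : {subset s <= all_points w}.
    by move=> x /sec_pts [j [b [-> _]]]; apply: pt_all.
  have hr : (n <= \rank (@cmx F V B f s))%N.
    have := Ht setT; rewrite cardsT card_ord => h; apply: leq_trans h _.
    apply: mxrankS; apply: Sp_sub => j _; rewrite /Ablk.
    case E: (t j) => [b|]; last by move: (ht j); rewrite E.
    by rewrite genmxE; apply: crow_cmx; apply: pt_sec.
  have hsz : (size s <= n)%N.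
    by rewrite size_pmap; apply: leq_trans (count_size _ _) _; rewrite size_enum_ord.
  have hi : lin_indep s.
    apply: (rank_indep hB hf sP); apply: leq_trans hsz hr.
  have := hleg t s (fun x h => h) hi; rewrite card_ord.
  have := rank_leq_row (@cmx F V B f s).
  lia.
have [S HS] : exists S, (\rank (Sp vv s0 S) < #|S|)%N.
  apply: NNPP => C; apply: nH => S; rewrite leqNgt; apply/negP => h; apply: C; by exists S.
have ST : S != setT.
  apply/eqP => ST; subst S.
  have [s [sP hi hn]] := hfull.
  have := L setT s _ hi.
  move: HS; rewrite cardsT card_ord => HS.
  have : (n <= size s)%N by rewrite card_ord in hn.
  suff: (size s <= \rank (Sp vv s0 setT))%N by lia.
  apply: L hi => x /sP /all_pts [j [b ->]]; exists j, b; by rewrite inE.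
have cS : #|{: {i : 'I_n | i \in S}}| = #|S|.
  by rewrite card_sig; apply: eq_card => x; rewrite !inE.
exists S; split.
- by apply: leq_ltn_trans HS.
- by move: (@proper_card _ S setT); rewrite properT ST cardsT card_ord; apply.
- move=> sig s sP hi; rewrite cS.
  suff: (size s <= \rank (Sp vv s0 S))%N by lia.
  apply: L hi => x /sP /sec_pts [j [b [-> _]]]; exists (val j), b; split => //.
  exact: (valP j).
- case=> s [sP hi hn]; rewrite cS in hn.
  suff: (size s <= \rank (Sp vv s0 S))%N by lia.
  apply: L hi => x /sP /all_pts [j [b ->]]; exists (val j), b; split => //.
  exact: (valP j).
Qed.
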